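(* For any coprime $r>1$ and $0<a<r$, on the Danilov resolution of $\frac1r(1,a,r-a)$ the $\mathbb Q$-divisors $R_i$ satisfy, for all $i=0,\dots,r-1$ (indices mod $r$), \[X_i=D_X+R_i-R_{i+1},\qquad Y_i=D_Y+R_i-R_{i+a},\qquad Z_i=D_Z+R_i-R_{i-a}.\]
   Context: Notation: for integers $s$ and $t>0$, $\langle s\rangle_t$ is the least non-negative integer congruent to $s$ modulo $t$. A pair of integers $(r,a)$ is admissible if $r\ge1$, $0\le a<r$, $\gcd(r,a)=1$ (so $a=0$ only for $r=1$). For admissible $(r,a)$ put $N(r,a)=\mathbb Z^3+\mathbb Z\cdot\frac1r(1,a,r-a)\subset\mathbb Q^3$; $e_1,e_2,e_3$ is the standard basis, $e_j^*$ the $j$-th coordinate function, and $\Delta(r,a)$ the cone spanned by $e_1,e_2,e_3$. Let $b$ be an inverse of $a$ modulo $r$ and $p_i=\frac1r(\langle -ib\rangle_r,r-i,i)$, $i=0,\dots,r$ (so $p_0=e_2$, $p_r=e_3$, $p_{r-a}=\frac1r(1,a,r-a)$). For $r>1$ let $(r_L,a_L)=(r-a,\langle r\rangle_{r-a})$, $(r_R,a_R)=(a,\langle -r\rangle_a)$; there are lattice isomorphisms $L:N(r_L,a_L)\to N(r,a)$, $R:N(r_R,a_R)\to N(r,a)$ with $L(e_1)=e_1$, $L(e_2)=e_2$, $L(e_3)=p_{r-a}$, $R(e_1)=e_1$, $R(e_2)=p_{r-a}$, $R(e_3)=e_3$. The Danilov fan $\Sigma(r,a)$ is defined recursively: $\Sigma(1,0)$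 is $\Delta(1,0)$ with its faces; for $r>1$, $\Sigma(r,a)$ consists of the cone spanned by $e_2,e_3,p_{r-a}$ with its faces, together with $L(\Sigma(r_L,a_L))$ and $R(\Sigma(r_R,a_R))$. The Danilov resolution $Y$ is the smooth toric variety of $\Sigma(r,a)$, with torus $T$; its rays are spanned by $e_1,p_0,\dots,p_r$; $D_i$ is the $T$-invariant prime divisor of the ray through $p_i$ and $E_j$ that of $e_j$. The permutation $\tau(r,a,\cdot)$ of $\{0,\dots,r-1\}$: if $a\in\{1,r-1\}$, $\tau(r,a,i)=\langle ai-1\rangle_r$; otherwise $\tau(r,a,i)=\tau(r-a,\langle r\rangle_{r-a},\langle i\rangle_{r-a})$ for $i\ge a$ and $\tau(r,a,i)=(r-a)+\tau(a,\langle -r\rangle_a,i)$ for $i<a$. With indices mod $r$, on $Y$ define $Y_{i-a}=\sum_{k=0}^{\tau(r,a,i)}D_k$, $Z_i=\sum_{k=\tau(r,a,i)+1}^{r}D_k$ ($i=0,\dots,r-1$), and $X_0,\dots,X_{r-1}$ the unique divisors with $X_0=E_1$ and $X_i+Z_{i+1}=Z_i+X_{i-a}$ for all $i$. Define the $\mathbb Q$-divisors $D_X=E_1+\sum_{i=0}^r e_1^*(p_i)D_i$, $D_Y=\sum_{i=0}^r e_2^*(p_i)D_i$, $D_Z=\sum_{i=0}^r e_3^*(p_i)D_i$, and let $R_0,\dots,R_{r-1}$ be the unique $\mathbb Q$-divisors with $R_0=0$ and $Z_i=D_Z+R_i-R_{i-a}$ for all $i$. *)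

(* Defs.v *)
From HB Require Import structures.
From mathcomp Require Import all_boot all_order all_algebra.
Unset Printing Implicit Defensive.
Import Order.TTheory GRing.Theory Num.Theory.

(* The permutation tau(r,a,.) of {0,...,r-1}, defined by recursion on r
   (fuel n >= r suffices, since r strictly decreases along the recursion).
   <s>_t for natural numbers is computed with %% ; <a i - 1>_r = (a i + r - 1) %% r,
   <-r>_a = (a - r %% a) %% a. *)
Fixpoint tau_fuel (n r a i : nat) : nat :=
  match n with
  | 0 => 0
  | n'.+1 =>
    if (a == 1) || (a == r - 1) then (a * i + r - 1) %% r
    else if a <= i then tau_fuel n' (r - a) (r %% (r - a)) (i %% (r - a))
    else (r - a) + tau_fuel n' a ((a - r %% a) %% a) i
  end.

Definition tau (r a i : nat) : nat := tau_fuel r r a i.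

Local Open Scope ring_scope.

(* T-invariant Q-divisors on the Danilov resolution Y: rational combinations of
   the T-invariant prime divisors, indexed by the rays of Sigma(r,a):
   None <-> E_1 (ray e_1), Some k <-> D_k (ray p_k), k = 0..r. *)
Definition Div (r : nat) := {ffun option 'I_r.+1 -> rat}.

Definition E1 (r : nat) : Div r := [ffun x => if x is None then 1 else 0].
Definition Dk (r k : nat) : Div r :=
  [ffun x => if x is Some j then (nat_of_ord j == k)%:R else 0].

(* Y_{i-a} = sum_{k=0}^{tau(i)} D_k, i.e. Y_j = sum_{k <= tau(<j+a>_r)} D_k *)
Definition Ydiv (r a j : nat) : Div r :=
  \sum_(k < r.+1 | (k <= tau r a ((j + a) %% r))%N) Dk r k.
Definition Zdiv (r a i : nat) : Div r :=
  \sum_(k < r.+1 | (tau r a (i %% r) < k)%N) Dk r k.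

(* coordinates of p_k = (1/r)(<-kb>_r, r-k, k), b an inverse of a mod r *)
Definition e1p (r b k : nat) : rat := ((r - (k * b) %% r) %% r)%:R / r%:R.
Definition e2p (r k : nat) : rat := (r - k)%:R / r%:R.
Definition e3p (r k : nat) : rat := k%:R / r%:R.

Definition dscale (r : nat) (c : rat) (D : Div r) : Div r := [ffun x => c * D x].

Definition DX (r b : nat) : Div r := E1 r + \sum_(k < r.+1) dscale r (e1p r b k) (Dk r k).
Definition DY (r : nat) : Div r := \sum_(k < r.+1) dscale r (e2p r k) (Dk r k).
Definition DZ (r : nat) : Div r := \sum_(k < r.+1) dscale r (e3p r k) (Dk r k).

Definition isXfamily (r a : nat) (X : nat -> Div r) : Prop :=
  X 0%N = E1 r /\
  forall i, (i < r)%N ->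
    X i + Zdiv r a ((i + 1) %% r)%N = Zdiv r a i + X ((i + r - a) %% r)%N.

Definition isRfamily (r a : nat) (R : nat -> Div r) : Prop :=
  R 0%N = 0 /\
  forall i, (i < r)%N -> Zdiv r a i = DZ r + R i - R ((i + r - a) %% r)%N.

(* Main.v *)
Require Import Defs.
From HB Require Import structures.
From mathcomp Require Import all_boot all_order all_algebra.
Import Order.TTheory GRing.Theory Num.Theory.
Local Open Scope ring_scope.
From mathcomp Require Import zify ring lra.
Import Order.TTheory GRing.Theory Num.Theory.

Local Close Scope ring_scope.

Definition Pn (r b m : nat) := exists n, b* m <= n* r /\ n* r < b* m + b.

Lemma Lfar r b rL bL m : r* bL = rL* b + 1 -> 0 < bL -> m.+1 < r ->
  Pn r b m <-> Pn rL bL m.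
Proof.
move=> E hbL hm; split=> -[n [h1 h2]]; exists n.
- have nb : n < b.
    case: (ltnP n b) => // H; exfalso.
    have : b * r <= n * r by rewrite leq_mul2r H orbT.
    nia.
  split.
  + case: (leqP (bL* m) (n* rL)) => // H; exfalso.
    have : (n* rL + 1) * b <= bL* m* b by rewrite leq_mul2r; apply/orP; right; lia.
    nia.
  + case: (ltnP (n* rL) (bL* m + bL)) => // H; exfalso.
    have : (bL* m+bL)* b <= n* rL* b by rewrite leq_mul2r H orbT.
    nia.
- have nb : n < b.
    case: (ltnP n b) => // H; exfalso.
    have : b * rL <= n * rL by rewrite leq_mul2r H orbT.
    nia.
  split.
  + case: (leqP (b* m) (n* r)) => // H; exfalso.
    have : (n* r + 1) * bL <= b* m* bL by rewrite leq_mul2r; apply/orP; right; lia.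
    nia.
  + case: (ltnP (n* r) (b* m + b)) => // H; exfalso.
    have : (b* m+b)* bL <= n* r* bL by rewrite leq_mul2r H orbT.
    nia.
Qed.

Lemma Rlhs r b a q m : a * b = q * r + 1 -> q < b -> 0 < b -> m.+1 < a ->
  Pn r b m <-> Pn a q m.
Proof.
move=> E hqb hb hm; split=> -[n [h1 h2]]; exists n.
- have nq : n < q.
    case: (ltnP n q) => // H; exfalso.
    have : q * r <= n * r by rewrite leq_mul2r H orbT.
    nia.
  split.
  + case: (leqP (q * m) (n * a)) => // H; exfalso.
    have : (n * a + 1) * b <= q * m * b by rewrite leq_mul2r; apply/orP; right; lia.
    nia.
  + case: (ltnP (n * a) (q * m + q)) => // H; exfalso.
    have : (q * m + q) * b <= n * a * b by rewrite leq_mul2r H orbT.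
    nia.
- have nq : n < q.
    case: (ltnP n q) => // H; exfalso.
    have : q * a <= n * a by rewrite leq_mul2r H orbT.
    nia.
  split.
  + case: (leqP (b * m) (n * r)) => // H; exfalso.
    have : (n * r + 1) * q <= b * m * q by rewrite leq_mul2r; apply/orP; right; lia.
    nia.
  + case: (ltnP (n * r) (b * m + b)) => // H; exfalso.
    have : (b * m + b) * q <= n * r * q by rewrite leq_mul2r H orbT.
    nia.
Qed.

Lemma Rrhs r b a q rL bL m : a * b = q * r + 1 -> r * bL = rL * b + 1 ->
  r = rL + a -> b = bL + q -> 0 < bL -> 1 < r -> m < a ->
  Pn r b (rL + m) <-> Pn a q m.
Proof.
move=> E E2 hr hb hbL hr1 hm; split.
- move=> [n [h1 h2]].
  have nbL : bL <= n.
    case: (leqP bL n) => // H; exfalso.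
    have : n * r <= (bL - 1) * r by rewrite leq_mul2r; apply/orP; right; lia.
    nia.
  set n' := n - bL.
  have En : n = n' + bL by rewrite /n'; lia.
  rewrite En in h1 h2.
  have nq : n' < q.
    case: (ltnP n' q) => // H; exfalso.
    have : q * r <= n' * r by rewrite leq_mul2r H orbT.
    nia.
  exists n'; split.
  + case: (leqP (q * m) (n' * a)) => // H; exfalso.
    have : (n' * a + 1) * b <= q * m * b by rewrite leq_mul2r; apply/orP; right; lia.
    nia.
  + case: (ltnP (n' * a) (q * m + q)) => // H; exfalso.
    have : (q * m + q) * b <= n' * a * b by rewrite leq_mul2r H orbT.
    nia.
- move=> [n [h1 h2]].
  have nq : n < q.
    case: (ltnP n q) => // H; exfalso.
    have : q * a <= n * a by rewrite leq_mul2r H orbT.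
    nia.
  exists (n + bL); split.
  + case: (leqP (b * (rL + m)) ((n + bL) * r)) => // H; exfalso.
    have : (n * r + 2) * q <= b * m * q by rewrite leq_mul2r; apply/orP; right; nia.
    nia.
  + case: (ltnP ((n + bL) * r) (b * (rL + m) + b)) => // H; exfalso.
    have : (b * m + b) * q <= (n * r + 1) * q by rewrite leq_mul2r; apply/orP; right; nia.
    nia.
Qed.

Lemma Per r b m k : Pn r b (m + k * r) <-> Pn r b m.
Proof.
split=> -[n [h1 h2]].
- exists (n - k * b); split; nia.
- exists (n + k * b); split; nia.
Qed.

Lemma Plast r b : b < r -> ~ Pn r b r.-1.
Proof.
move=> hb [n [h1 h2]].
have nb : n < b.
  case: (ltnP n b) => // H; exfalso.
  have : b * r <= n * r by rewrite leq_mul2r H orbT.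
  nia.
have : n * r <= (b - 1) * r by rewrite leq_mul2r; apply/orP; right; lia.
nia.
Qed.

Definition cl (r b k : nat) := (b * k + r - 1) %/ r.
Definition Pb (r b m : nat) : bool := cl r b m * r < b * m + b.

Lemma cl_bounds r b k : 0 < r -> b * k <= cl r b k * r /\ cl r b k * r < b * k + r.
Proof.
move=> hr; rewrite /cl.
have := divn_eq (b * k + r - 1) r.
have := ltn_pmod (b * k + r - 1) hr.
lia.
Qed.

Lemma PbP r b m : 0 < r -> Pn r b m <-> Pb r b m.
Proof.
move=> hr; have [h1 h2] := cl_bounds r b m hr; rewrite /Pb; split.
- move=> [n [h3 h4]].
  have : cl r b m <= n.
    case: (leqP (cl r b m) n) => // H; exfalso.
    have : n * r <= (cl r b m - 1) * r by rewrite leq_mul2r; apply/orP; right; lia.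
    nia.
  move=> H; have : cl r b m * r <= n * r by rewrite leq_mul2r H orbT.
  lia.
- move=> H; exists (cl r b m); lia.
Qed.

Lemma cl_step r b k : 0 < r -> b < r -> cl r b k.+1 = cl r b k + Pb r b k.
Proof.
move=> hr hb; have [h1 h2] := cl_bounds r b k hr; have [h3 h4] := cl_bounds r b k.+1 hr.
rewrite /Pb; case H: (cl r b k * r < b * k + b) => /=.
- have A : cl r b k < cl r b k.+1.
    case: (ltnP (cl r b k) (cl r b k.+1)) => // H'; exfalso.
    have : cl r b k.+1 * r <= cl r b k * r by rewrite leq_mul2r H' orbT.
    nia.
  have B : cl r b k.+1 < (cl r b k).+2.
    case: (ltnP (cl r b k.+1) (cl r b k).+2) => // H'; exfalso.
    have : (cl r b k).+2 * r <= cl r b k.+1 * r by rewrite leq_mul2r H' orbT.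
    nia.
  lia.
- have A : cl r b k <= cl r b k.+1.
    case: (leqP (cl r b k) (cl r b k.+1)) => // H'; exfalso.
    have : cl r b k.+1 * r <= (cl r b k).-1 * r by rewrite leq_mul2r; apply/orP; right; lia.
    nia.
  have B : cl r b k.+1 <= cl r b k.
    case: (leqP (cl r b k.+1) (cl r b k)) => // H'; exfalso.
    have : (cl r b k).+1 * r <= cl r b k.+1 * r by rewrite leq_mul2r H' orbT.
    nia.
  lia.
Qed.

Lemma sum_Pb r b k : 0 < r -> b < r -> \sum_(m < k) Pb r b m = cl r b k.
Proof.
move=> hr hb; elim: k => [|k IH].
  by rewrite big_ord0 /cl muln0 add0n divn_small //; lia.
by rewrite big_ord_recr /= IH cl_step.
Qed.

Lemma cl_mod r b k : 0 < r -> cl r b k * r = b * k + (r - (k * b) %% r) %% r.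
Proof.
move=> hr; have [h1 h2] := cl_bounds r b k hr.
have := divn_eq (k * b) r; have := ltn_pmod (k * b) hr.
case: (posnP ((k * b) %% r)) => H0.
- rewrite H0 subn0 modnn addn0 => _ E.
  have : cl r b k = (k * b) %/ r.
    case: (ltngtP (cl r b k) ((k * b) %/ r)) => // H; exfalso.
    + have : cl r b k * r <= ((k * b) %/ r).-1 * r by rewrite leq_mul2r; apply/orP; right; lia.
      nia.
    + have : ((k * b) %/ r).+1 * r <= cl r b k * r by rewrite leq_mul2r H orbT.
      nia.
  move=> ->; lia.
- move=> H1 E; rewrite (modn_small (d:=r)); last lia.
  have : cl r b k = (k * b) %/ r + 1.
    case: (ltngtP (cl r b k) ((k * b) %/ r + 1)) => // H; exfalso.
    + have : cl r b k * r <= ((k * b) %/ r) * r by rewrite leq_mul2r; apply/orP; right; lia.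
      nia.
    + have : ((k * b) %/ r).+2 * r <= cl r b k * r by rewrite leq_mul2r; apply/orP; right; lia.
      nia.
  move=> ->; lia.
Qed.

Lemma Pbase1 r m : 1 < r -> m < r -> Pn r 1 m <-> m = 0.
Proof.
move=> hr hm; split.
- move=> [n [h1 h2]]; case: (posnP n) => Hn; first by subst; lia.
  have : r <= n * r by rewrite leq_pmull.
  lia.
- move=> ->; exists 0; lia.
Qed.

Lemma Pbase2 r m : 1 < r -> m < r.-1 -> Pn r r.-1 m.
Proof. move=> hr hm; exists m; split; nia. Qed.

Lemma Pb_eq r b m r' b' m' : 0 < r -> 0 < r' ->
  (Pn r b m <-> Pn r' b' m') -> Pb r b m = Pb r' b' m'.
Proof.
move=> h h' E; apply/idP/idP.
- by move/(PbP _ _ _ h)/E/(PbP _ _ _ h').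
- by move/(PbP _ _ _ h')/E/(PbP _ _ _ h).
Qed.

Lemma Pb_per r b i : 0 < r -> b < r -> 0 < i ->
  Pb r b i.-1 = (0 < i %% r) && Pb r b (i %% r).-1.
Proof.
move=> hr hb hi.
have E := divn_eq i r.
case: (posnP (i %% r)) => H /=.
- apply/negbTE/negP => /(PbP _ _ _ hr).
  have -> : i.-1 = r.-1 + (i %/ r).-1 * r.
    have : 0 < i %/ r by nia.
    nia.
  by move/Per; apply: Plast.
- apply: Pb_eq => //.
  have -> : i.-1 = (i %% r).-1 + (i %/ r) * r by lia.
  exact: Per.
Qed.

Lemma qdef r a b : 0 < r -> (a * b) %% r = 1 -> a * b = (a * b) %/ r * r + 1.
Proof. by move=> hr H; rewrite {1}(divn_eq (a * b) r) H. Qed.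

Lemma qfacts r a b q : 1 < r -> 1 < a -> a.+1 < r -> b < r -> a * b = q * r + 1 ->
  [/\ 0 < q, q < a, q < b, b - q < r - a & r * (b - q) = (r - a) * b + 1].
Proof.
move=> hr ha har hb E.
have q0 : 0 < q.
  case: (posnP q) => Hq //; exfalso; move: E; rewrite Hq mul0n add0n => /eqP.
  by rewrite muln_eq1 => /andP [/eqP Ha _]; move: ha; rewrite Ha.
have qa : q < a.
  case: (ltnP q a) => // H; exfalso.
  have : a * r <= q * r by rewrite leq_mul2r H orbT.
  nia.
have qb : q < b.
  case: (ltnP q b) => // H; exfalso.
  have : a * b <= a * q by rewrite leq_mul2l H orbT.
  nia.
split => //.
- case: (ltnP (b - q) (r - a)) => // H; exfalso.
  have : a * (r - a) <= a * (b - q) by rewrite leq_mul2l H orbT.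
  nia.
- nia.
Qed.

Lemma aLfact r a b q : 1 < r - a -> q < b -> r * (b - q) = (r - a) * b + 1 ->
  ((r %% (r - a)) * (b - q)) %% (r - a) = 1.
Proof.
move=> h hq E.
by rewrite modnMml E mulnC modnMDl modn_small.
Qed.

Lemma aRfact r a b q : 1 < a -> a * b = q * r + 1 ->
  (((a - r %% a) %% a) * q) %% a = 1.
Proof.
move=> ha E.
have ha0 : 0 < a by lia.
have s := ltn_pmod r ha0.
have D := divn_eq r a.
rewrite modnMml -(modnMDl b).
have -> : b * a + (a - r %% a) * q = (q + (r %/ a) * q) * a + 1 by nia.
by rewrite modnMDl modn_small.
Qed.

Lemma inv_pos r a b : 1 < r -> (a * b) %% r = 1 -> 0 < a /\ 0 < b.
Proof.
move=> hr H; split; case: (posnP _) => // E; move: H; rewrite E ?mul0n ?muln0 mod0n //.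
Qed.



Lemma mod_inj_int a m i j : 0 < m -> a <= i -> a <= j -> i < a + m -> j < a + m ->
  i %% m = j %% m -> i = j.
Proof.
move=> hm.
wlog Hij : i j / i <= j.
  move=> W h1 h2 h3 h4 h5; case: (leqP i j) => H; first exact: W.
  by apply/esym/W => //; apply: ltnW.
move=> h1 h2 h3 h4 Hm.
have : m %| j - i by rewrite -eqn_mod_dvd // Hm.
case: (posnP (j - i)) => H0; first by lia.
move/(dvdn_leq H0); lia.
Qed.

Lemma tau_props n : forall r a b, 1 < r -> 0 < a -> a < r -> 0 < b -> b < r ->
  (a * b) %% r = 1 -> r <= n ->
  [/\ (forall i, i < r -> tau_fuel n r a i < r),
      (forall i j, i < r -> j < r -> tau_fuel n r a i = tau_fuel n r a j -> i = j) &
      (forall i, i < r -> ((0 < i) && Pb r b i.-1) = Pb r b (tau_fuel n r a i))].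
Proof.
elim: n => [|n IH] r a b hr ha har hb hbr hab hn; first by lia.
have hr0 : 0 < r by lia.
case hbase : ((a == 1) || (a == r - 1)).
- have tE : forall i, tau_fuel n.+1 r a i = (a * i + r - 1) %% r by move=> i /=; rewrite hbase.
  case/orP: hbase => /eqP Ha.
  + subst a; move: hab; rewrite mul1n modn_small // => Hb; subst b.
    have tv : forall i, i < r -> tau_fuel n.+1 r 1 i = if i == 0 then r.-1 else i.-1.
      move=> i hi; rewrite tE mul1n; case: i hi => [|i] hi /=.
        by rewrite add0n modn_small //; lia.
      have -> : i.+1 + r - 1 = 1 * r + i by lia.
      by rewrite modnMDl modn_small //; lia.
    have Pb1 : forall m, m < r -> Pb r 1 m = (m == 0).
      move=> m hm; apply/idP/idP.
      * by move/(PbP _ _ _ hr0)/(Pbase1 _ _ hr hm) => ->.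
      * by move/eqP => E; apply/(PbP _ _ _ hr0)/(Pbase1 _ _ hr hm).
    split.
    * by move=> i hi; rewrite tE ltn_pmod.
    * move=> i j hi hj; rewrite !tv //; case: i hi => [|i] hi; case: j hj => [|j] hj //=; lia.
    * move=> i hi; rewrite tv // Pb1; last by case: (i == 0); lia.
      case: i hi => [|i] hi //=; rewrite Pb1 //; lia.
  + subst a.
    have Eb : b = r.-1.
      move: hab; have -> : (r - 1) * b = (b - 1) * r + (r - b) by nia.
      rewrite modnMDl modn_small; lia.
    subst b.
    have tv : forall i, i < r -> tau_fuel n.+1 r (r - 1) i = r.-1 - i.
      move=> i hi; rewrite tE.
      have -> : (r - 1) * i + r - 1 = i * r + (r.-1 - i) by nia.
      by rewrite modnMDl modn_small; lia.
    have Pb2 : forall m, m < r.-1 -> Pb r r.-1 m.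
      by move=> m hm; apply/(PbP _ _ _ hr0)/Pbase2.
    have Pb2' : Pb r r.-1 r.-1 = false.
      by apply/negbTE/negP => /(PbP _ _ _ hr0); apply: Plast; lia.
    split.
    * by move=> i hi; rewrite tE ltn_pmod.
    * move=> i j hi hj; rewrite !tv //; lia.
    * move=> i hi; rewrite tv //; case: i hi => [|i] hi /=.
        by rewrite subn0 Pb2'.
      by rewrite !Pb2 //; lia.
- have ha1 : 1 < a by move: hbase; case: (ltngtP a 1) => //; lia.
  have ha2 : a.+1 < r by move: hbase; rewrite orbC; case: (ltngtP a (r - 1)) => //; lia.
  have E := qdef _ _ _ hr0 hab.
  set q := (a * b) %/ r in E.
  have [q0 qa qb hbL E2] := qfacts _ _ _ _ hr ha1 ha2 hbr E.
  set rL := r - a in hbL E2.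
  set bL := b - q in hbL E2.
  have hrL : 1 < rL by rewrite /rL; lia.
  have habL := aLfact _ _ _ _ hrL qb E2.
  have habR := aRfact _ _ _ _ ha1 E.
  have [haL0 hbL0] := inv_pos _ _ _ hrL habL.
  have [haR0 _] := inv_pos _ _ _ ha1 habR.
  have hrLn : rL <= n by rewrite /rL; clear -hn ha1; lia.
  have han : a <= n by clear -hn ha2; lia.
  have := IH rL (r %% rL) bL hrL haL0 (ltn_pmod _ (ltnW hrL)) hbL0 hbL habL hrLn.
  case=> [L1 L2 L3].
  have := IH a ((a - r %% a) %% a) q ha1 haR0 (ltn_pmod _ ha) q0 qa habR han.
  case=> [R1 R2 R3].
  have tE : forall i, tau_fuel n.+1 r a i =
      if a <= i then tau_fuel n rL (r %% rL) (i %% rL)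
      else rL + tau_fuel n a ((a - r %% a) %% a) i by move=> i /=; rewrite hbase.
  have hrLr : rL < r by rewrite /rL; clear -ha1 ha2; lia.
  have rLa : r = rL + a by rewrite /rL; clear -ha2; lia.
  have bLq : b = bL + q by rewrite /bL; clear -qb; lia.
  have hrL0 : 0 < rL by clear -hrL; lia.
  clear hab habL habR; clearbody q rL bL.
  have {hbL0} hbL0 : 0 < bL by clear -hbL0 bLq; lia.
  split.
  + clear E E2; move=> i hi; rewrite tE; case: ifP => H.
    * by apply: ltn_trans hrLr; apply: L1; rewrite ltn_pmod.
    * by move/negbT: H; rewrite -ltnNge => H; have := R1 i H; lia.
  + clear E E2; move=> i j hi hj; rewrite !tE.
    case: ifP => Hi; case: ifP => Hj.
    * move/(L2 _ _ (ltn_pmod _ hrL0) (ltn_pmod _ hrL0)) => Hm.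
      by apply: (mod_inj_int a rL i j hrL0) => //; clear Hm; lia.
    * by have := L1 (i %% rL) (ltn_pmod _ hrL0); lia.
    * by have := L1 (j %% rL) (ltn_pmod _ hrL0); lia.
    * move/addnI; apply: R2; lia.
  + move=> i hi; rewrite tE; case: ifP => H.
    * have hi0 : 0 < i by lia.
      rewrite hi0 /=.
      rewrite (Pb_eq _ _ _ _ _ _ hr0 hrL0 (Lfar _ _ _ _ _ E2 hbL0 _)); last by lia.
      rewrite Pb_per // L3; last by rewrite ltn_pmod.
      apply: Pb_eq => //; apply: iff_sym; apply: Lfar => //.
      have := L1 (i %% rL) (ltn_pmod _ hrL0); lia.
    * move/negbT: H; rewrite -ltnNge => H.
      have -> : (0 < i) && Pb r b i.-1 = (0 < i) && Pb a q i.-1.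
        case: i hi H => [|i] hi H //=.
        apply: Pb_eq; try lia.
        apply: Rlhs; try lia; done.
      rewrite R3 //; apply: Pb_eq; try lia.
      apply: iff_sym; apply: (Rrhs r b a q rL bL); try done; try lia.
      exact: R1.
Qed.

Lemma sum_perm r (f : nat -> nat) (F : nat -> nat) :
  (forall t, t < r -> f t < r) ->
  (forall s t, s < r -> t < r -> f s = f t -> s = t) ->
  \sum_(t < r) F (f t) = \sum_(m < r) F m.
Proof.
move=> Hf Hi.
pose h : 'I_r -> 'I_r := fun t => Ordinal (Hf t (ltn_ord t)).
have hinj : injective h.
  by move=> x y /(congr1 val) /= /(Hi _ _ (ltn_ord x) (ltn_ord y)) /val_inj.
by rewrite [RHS](reindex_inj hinj).
Qed.

Lemma sum_lt r k : \sum_(m < r) (m < k) = minn k r.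
Proof.
elim: r => [|r IH]; first by rewrite big_ord0 minn0.
rewrite big_ord_recr /= IH; case: (ltnP r k) => H; lia.
Qed.

Lemma sum_widen r j (G : nat -> nat) : j <= r ->
  \sum_(t < j) G t = \sum_(t < r) ((t < j) * G t).
Proof.
move=> hj; rewrite (big_ord_widen r G hj) big_mkcond /=.
by apply: eq_bigr => t _; case: (t < j); rewrite ?mul1n ?mul0n.
Qed.

Lemma Pb_mod r b i : 0 < r -> b < r -> 0 < i -> Pb r b i.-1 = (0 < (i * b) %% r <= b).
Proof.
move=> hr hbr; case: i => // p _ /=.
move: (divn_eq (p.+1 * b) r) (ltn_pmod (p.+1 * b) hr).
set u := _ %/ _; set v := _ %% _ => D M.
have Ei : b * p + b = p.+1 * b by rewrite mulSn addnC mulnC.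
apply/idP/idP.
- move/(PbP _ _ _ hr) => [n [h1 h2]].
  have E1 : n <= u.
    case: (leqP n u) => // H; exfalso.
    have : u.+1 * r <= n * r by rewrite leq_mul2r H orbT.
    (timeout 15 nia).
  have E2 : u <= n.
    case: (leqP u n) => // H; exfalso.
    have : n.+1 * r <= u * r by rewrite leq_mul2r H orbT.
    (timeout 15 nia).
  have E3 : n = u by (timeout 15 lia).
  subst n; apply/andP; split; (timeout 15 nia).
- move=> /andP [h1 h2]; apply/(PbP _ _ _ hr); exists u; split; (timeout 15 nia).
Qed.

Lemma back r a b0 x : (a * b0) %% r = 1 -> x %% r = ((x * a) %% r * b0) %% r.
Proof. by move=> hab; rewrite modnMml -mulnA -modnMmr hab muln1. Qed.

Lemma orbit_inj r a b0 s t : 1 < r -> (a * b0) %% r = 1 ->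
  s < r -> t < r -> (s.+1 * a) %% r = (t.+1 * a) %% r -> s = t.
Proof.
move=> hr hab hs ht H.
have : s.+1 %% r = t.+1 %% r by rewrite (back _ _ _ s.+1 hab) (back _ _ _ t.+1 hab) H.
move/(mod_inj_int 1 r s.+1 t.+1 (ltnW hr)) => E.
clear hab H.
have : s.+1 = t.+1 by apply: E; (timeout 15 lia).
by case.
Qed.

Lemma S_lemma r a b0 t : 1 < r -> b0 < r -> (a * b0) %% r = 1 -> t < r ->
  (t < b0) = (0 < (t.+1 * a) %% r) && Pb r b0 ((t.+1 * a) %% r).-1.
Proof.
move=> hr hbr hab ht.
have hr0 : 0 < r by (timeout 15 lia).
have B := back _ _ _ t.+1 hab.
clear hab.
case: (posnP ((t.+1 * a) %% r)) => H /=.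
- move: B; rewrite H mul0n mod0n => B.
  have : t.+1 = r.
    case: (ltnP t.+1 r) => H'; last by (timeout 15 lia).
    by move: B; rewrite modn_small.
  (timeout 15 lia).
- rewrite Pb_mod // -B.
  case: (ltnP t.+1 r) => H'.
  + rewrite modn_small //; (timeout 15 lia).
  + have -> : t.+1 = r by (timeout 15 lia).
    by rewrite modnn /=; (timeout 15 lia).
Qed.

Lemma orbit_all r a b0 i : (a * b0) %% r = 1 -> i < r -> ((i * b0 %% r) * a) %% r = i.
Proof.
move=> hab hi; rewrite modnMml -mulnA [b0 * a]mulnC -modnMmr hab muln1 modn_small //.
Qed.

Lemma idx_step r a j : a < r -> (((j.+1) * a) %% r + r - a) %% r = (j * a) %% r.
Proof.
move=> har.
have -> : (j.+1 * a) %% r + r - a = (j.+1 * a) %% r + (r - a) by (timeout 15 lia).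
rewrite modnDml.
have -> : j.+1 * a + (r - a) = j * a + r by rewrite mulSn; (timeout 15 lia).
by rewrite modnDr.
Qed.

Lemma count_full r a b0 k : 1 < r -> 0 < a -> a < r -> 0 < b0 -> b0 < r ->
  (a * b0) %% r = 1 -> k <= r ->
  \sum_(t < r) (tau r a ((t.+1 * a) %% r) < k) = k.
Proof.
move=> hr ha har hb0 hbr hab hk.
have [T1 T2 _] := tau_props r r a b0 hr ha har hb0 hbr hab (leqnn r).
have hr0 : 0 < r by lia.
have := @sum_perm r (fun t => tau r a ((t.+1 * a) %% r)) (fun m => nat_of_bool (m < k)).
move=> ->; first by rewrite sum_lt; lia.
- by move=> t ht; apply: T1; rewrite ltn_pmod.
- move=> s t hs ht /T2 H; apply: (orbit_inj _ _ _ _ _ hr hab) => //.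
  by apply: H; rewrite ltn_pmod.
Qed.

Lemma count_b0 r a b0 k : 1 < r -> 0 < a -> a < r -> 0 < b0 -> b0 < r ->
  (a * b0) %% r = 1 -> k <= r ->
  \sum_(t < b0) (tau r a ((t.+1 * a) %% r) < k) = cl r b0 k.
Proof.
move=> hr ha har hb0 hbr hab hk.
have [T1 T2 T3] := tau_props r r a b0 hr ha har hb0 hbr hab (leqnn r).
have hr0 : 0 < r by lia.
rewrite (sum_widen r b0 (fun t => nat_of_bool (tau r a ((t.+1 * a) %% r) < k)) (ltnW hbr)).
rewrite -(sum_Pb r b0 k hr0 hbr) (sum_widen r k (fun m => nat_of_bool (Pb r b0 m)) hk).
have := @sum_perm r (fun t => tau r a ((t.+1 * a) %% r))
   (fun m => nat_of_bool (m < k) * nat_of_bool (Pb r b0 m)).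
move=> <-.
- apply: eq_bigr => t _ /=.
  rewrite (S_lemma _ _ _ _ hr hbr hab (ltn_ord t)) /tau T3 ?ltn_pmod //.
  by rewrite mulnC.
- by move=> t ht; apply: T1; rewrite ltn_pmod.
- move=> s t hs ht /T2 H; apply: (orbit_inj _ _ _ _ _ hr hab) => //.
  by apply: H; rewrite ltn_pmod.
Qed.

Local Open Scope ring_scope.

Lemma ffBE r (f g : Div r) x : (f - g) x = f x - g x.
Proof. by rewrite !ffunE. Qed.
Lemma ffDE r (f g : Div r) x : (f + g) x = f x + g x.
Proof. by rewrite !ffunE. Qed.
Lemma ffNE r (f : Div r) x : (- f) x = - f x.
Proof. by rewrite !ffunE. Qed.

Lemma sum_delta r (F : nat -> rat) (j : 'I_r.+1) :
  \sum_(k < r.+1) F k * ((j : nat) == k)%:R = F j.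
Proof.
rewrite (bigD1 j) //= eqxx mulr1 big1 ?addr0 // => k hk.
suff -> : ((j : nat) == k) = false by rewrite mulr0.
by apply/negbTE/eqP => /val_inj E; move: hk; rewrite E eqxx.
Qed.

Lemma DkS r k (j : 'I_r.+1) : Dk r k (Some j) = ((j : nat) == k)%:R.
Proof. by rewrite ffunE. Qed.
Lemma DkN r k : Dk r k None = 0.
Proof. by rewrite ffunE. Qed.

Lemma ZS r a i (j : 'I_r.+1) : Zdiv r a i (Some j) = (tau r a (i %% r) < j)%:R.
Proof.
rewrite /Zdiv sum_ffunE big_mkcond /=.
rewrite -(sum_delta _ (fun k => (tau r a (i %% r) < k)%:R)).
by apply: eq_bigr => k _; rewrite DkS; case: ifP; rewrite ?mul1r ?mul0r.
Qed.
Lemma ZN r a i : Zdiv r a i None = 0.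
Proof. by rewrite /Zdiv sum_ffunE big1 // => k _; rewrite DkN. Qed.

Lemma YS r a i (j : 'I_r.+1) : Ydiv r a i (Some j) = (j <= tau r a ((i + a) %% r))%:R.
Proof.
rewrite /Ydiv sum_ffunE big_mkcond /=.
rewrite -(sum_delta _ (fun k => (k <= tau r a ((i + a) %% r))%:R)).
by apply: eq_bigr => k _; rewrite DkS; case: ifP; rewrite ?mul1r ?mul0r.
Qed.
Lemma YN r a i : Ydiv r a i None = 0.
Proof. by rewrite /Ydiv sum_ffunE big1 // => k _; rewrite DkN. Qed.

Lemma dsumS r (F : nat -> rat) (j : 'I_r.+1) :
  (\sum_(k < r.+1) dscale r (F k) (Dk r k)) (Some j) = F j.
Proof.
rewrite sum_ffunE -(sum_delta _ F); apply: eq_bigr => k _.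
by rewrite ffunE DkS.
Qed.
Lemma dsumN r (F : nat -> rat) :
  (\sum_(k < r.+1) dscale r (F k) (Dk r k)) None = 0.
Proof. by rewrite sum_ffunE big1 // => k _; rewrite ffunE DkN mulr0. Qed.

Lemma DZS r (j : 'I_r.+1) : DZ r (Some j) = j%:R / r%:R.
Proof. exact: dsumS. Qed.
Lemma DZN r : DZ r None = 0.
Proof. exact: dsumN. Qed.
Lemma DYS r (j : 'I_r.+1) : DY r (Some j) = (r - j)%:R / r%:R.
Proof. exact: dsumS. Qed.
Lemma DYN r : DY r None = 0.
Proof. exact: dsumN. Qed.
Lemma DXS r b (j : 'I_r.+1) : DX r b (Some j) = e1p r b j.
Proof. by rewrite /DX ffunE dsumS ffunE add0r. Qed.
Lemma DXN r b : DX r b None = 1.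
Proof. by rewrite /DX ffunE dsumN ffunE addr0. Qed.
Lemma E1S r (j : 'I_r.+1) : E1 r (Some j) = 0.
Proof. by rewrite ffunE. Qed.
Lemma E1N r : E1 r None = 1.
Proof. by rewrite ffunE. Qed.

Lemma sumZ r a (R : nat -> Div r) : (1 < r)%N -> (a < r)%N -> isRfamily r a R ->
  forall j, (j <= r)%N ->
  R ((j * a) %% r)%N = \sum_(t < j) (Zdiv r a ((t.+1 * a) %% r)%N - DZ r).
Proof.
move=> hr har [R0 HR]; elim=> [|j IH] hj.
  by rewrite mul0n mod0n big_ord0.
rewrite big_ord_recr /= -IH; last by lia.
have := HR ((j.+1 * a) %% r)%N (ltn_pmod _ (ltnW hr)).
rewrite idx_step // => H.
apply/ffunP => x; move/ffunP/(_ x): H; rewrite !ffunE => H.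
lra.
Qed.

Lemma R1 r a b (R : nat -> Div r) : (1 < r)%N -> (0 < a)%N -> (a < r)%N ->
  ((a * b) %% r)%N = 1%N -> isRfamily r a R -> R 1%N = DX r b - E1 r.
Proof.
move=> hr ha har hab HR.
have hr0 : (0 < r)%N by lia.
set b0 := (b %% r)%N.
have hab0 : ((a * b0) %% r)%N = 1%N by rewrite /b0 modnMmr.
have [_ hb0] := inv_pos _ _ _ hr hab0.
have hbr : (b0 < r)%N by rewrite /b0 ltn_pmod.
have E1' : ((b0 * a) %% r)%N = 1%N by rewrite mulnC.
rewrite -{1}E1' (@sumZ r a R hr har HR b0 (ltnW hbr)).
have rnz : (r%:R : rat) != 0 by rewrite pnatr_eq0; lia.
apply/ffunP => -[j|].
- rewrite sum_ffunE.
  under eq_bigr => t _ do rewrite ffBE ZS DZS modn_mod.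
  rewrite sumrB sumr_const card_ord -natr_sum count_b0 //; last by rewrite -ltnS.
  rewrite ffBE DXS E1S subr0 /e1p.
  have Hc := cl_mod r b0 j hr0.
  have Hm : ((j * b) %% r)%N = ((j * b0) %% r)%N by rewrite /b0 modnMmr.
  rewrite Hm.
  have -> : ((cl r b0 j)%:R : rat) = (b0 * j + (r - (j * b0) %% r) %% r)%:R / r%:R.
    by rewrite -Hc natrM mulfK.
  by rewrite natrD natrM; field.
- rewrite sum_ffunE big1; last by move=> t _; rewrite ffBE ZN DZN subr0.
  by rewrite ffBE DXN E1N subrr.
Qed.

Lemma idx_plus1 r a i : (a <= r)%N ->
  (((i.+1 %% r) + r - a) %% r)%N = ((((i + r - a) %% r).+1) %% r)%N.
Proof.
move=> har.
have -> : (i.+1 %% r + r - a = i.+1 %% r + (r - a))%N by lia.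
rewrite modnDml.
have -> : (((i + r - a) %% r).+1 = (i + (r - a)) %% r + 1)%N.
  by rewrite addn1; congr (_.+1); congr (_ %% _)%N; lia.
by rewrite modnDml; congr (_ %% _)%N; lia.
Qed.

Definition W r b (R : nat -> Div r) i := DX r b + R i - R ((i + 1) %% r)%N.

Lemma W_rec r a b R i : (a < r)%N -> isRfamily r a R -> (i < r)%N ->
  W r b R i + Zdiv r a ((i + 1) %% r)%N = Zdiv r a i + W r b R ((i + r - a) %% r)%N.
Proof.
move=> har [R0 HR] hi.
have hr0 : (0 < r)%N by lia.
have H1 := HR i hi.
have H2 := HR ((i + 1) %% r)%N (ltn_pmod _ hr0).
move: H2; rewrite addn1 idx_plus1 ?(ltnW har) // => H2.
rewrite /W !addn1.
apply/ffunP => x; move/ffunP/(_ x): H1; move/ffunP/(_ x): H2.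
rewrite ?ffBE ?ffDE ?ffNE => H2 H1.
lra.
Qed.

Lemma X_uniq r a b0 (X V : nat -> Div r) : (1 < r)%N -> (a < r)%N ->
  ((a * b0) %% r)%N = 1%N -> X 0%N = V 0%N ->
  (forall i, (i < r)%N -> X i + Zdiv r a ((i + 1) %% r)%N = Zdiv r a i + X ((i + r - a) %% r)%N) ->
  (forall i, (i < r)%N -> V i + Zdiv r a ((i + 1) %% r)%N = Zdiv r a i + V ((i + r - a) %% r)%N) ->
  forall i, (i < r)%N -> X i = V i.
Proof.
move=> hr har hab X0 HX HV.
have hr0 : (0 < r)%N by lia.
suff S : forall j, X ((j * a) %% r)%N = V ((j * a) %% r)%N.
  by move=> i hi; rewrite -(orbit_all _ _ _ _ hab hi).
elim=> [|j IH]; first by rewrite mul0n mod0n.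
have := HX _ (ltn_pmod (j.+1 * a) hr0); have := HV _ (ltn_pmod (j.+1 * a) hr0).
rewrite !idx_step // IH => H1 H2.
apply/ffunP => x; move/ffunP/(_ x): H1; move/ffunP/(_ x): H2.
rewrite ?ffBE ?ffDE ?ffNE => H2 H1.
lra.
Qed.

Lemma full_zero r a b0 : (1 < r)%N -> (0 < a)%N -> (a < r)%N -> (0 < b0)%N -> (b0 < r)%N ->
  ((a * b0) %% r)%N = 1%N ->
  \sum_(t < r) (Zdiv r a ((t.+1 * a) %% r)%N - DZ r) = 0.
Proof.
move=> hr ha har hb0 hbr hab.
have rnz : (r%:R : rat) != 0 by rewrite pnatr_eq0; lia.
apply/ffunP => -[j|]; rewrite sum_ffunE ffunE.
- under eq_bigr => t _ do rewrite ffBE ZS DZS modn_mod.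
  rewrite sumrB sumr_const card_ord -natr_sum (count_full _ _ b0) //; last by rewrite -ltnS.
  by rewrite -mulr_natr; field.
- by rewrite big1 // => t _; rewrite ffBE ZN DZN subr0.
Qed.

Definition Rc r a b0 i : Div r :=
  \sum_(t < (i * b0) %% r) (Zdiv r a ((t.+1 * a) %% r)%N - DZ r).

Lemma Rc_isR r a b0 : (1 < r)%N -> (0 < a)%N -> (a < r)%N -> (0 < b0)%N -> (b0 < r)%N ->
  ((a * b0) %% r)%N = 1%N -> isRfamily r a (Rc r a b0).
Proof.
move=> hr ha har hb0 hbr hab.
have hr0 : (0 < r)%N by lia.
split; first by rewrite /Rc mul0n mod0n big_ord0.
move=> i hi.
set p := ((i + r - a) %% r)%N.
set j' := ((p * b0) %% r)%N.
have hp : (p < r)%N by rewrite ltn_pmod.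
have hj' : (j' < r)%N by rewrite ltn_pmod.
have Hp : p = ((j' * a) %% r)%N by rewrite /j' orbit_all.
have Hi : i = ((j'.+1 * a) %% r)%N.
  rewrite mulSn -modnDmr -Hp /p modnDmr.
  have -> : (a + (i + r - a) = 1 * r + i)%N by lia.
  by rewrite modnMDl modn_small.
have Hji : ((i * b0) %% r)%N = (j'.+1 %% r)%N.
  by rewrite (back _ _ _ j'.+1 hab) -Hi.
have Hsum : \sum_(t < j'.+1) (Zdiv r a ((t.+1 * a) %% r)%N - DZ r) =
    Rc r a b0 p + (Zdiv r a i - DZ r).
  by rewrite big_ord_recr /= -Hi.
have HRp : Rc r a b0 p = \sum_(t < j') (Zdiv r a ((t.+1 * a) %% r)%N - DZ r) by [].
case: (ltnP j'.+1 r) => Hlt.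
- have HRi : Rc r a b0 i = \sum_(t < j'.+1) (Zdiv r a ((t.+1 * a) %% r)%N - DZ r).
    by rewrite /Rc Hji modn_small.
  rewrite HRi Hsum.
  apply/ffunP => x; rewrite ?ffBE ?ffDE ?ffNE; lra.
- have Er : j'.+1 = r by lia.
  have HRi : Rc r a b0 i = 0 by rewrite /Rc Hji Er modnn big_ord0.
  have Hs : \sum_(t < j'.+1) (Zdiv r a ((t.+1 * a) %% r)%N - DZ r) =
      \sum_(t < r) (Zdiv r a ((t.+1 * a) %% r)%N - DZ r) by rewrite Er.
  have := full_zero r a b0 hr ha har hb0 hbr hab.
  rewrite -Hs Hsum => H0; rewrite HRi.
  apply/ffunP => x; move/ffunP/(_ x): H0.
  rewrite ?ffBE ?ffDE ?ffNE ?ffunE => H0.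
  rewrite ?ffunE; lra.
Qed.

Lemma Y_id r a R i : (1 < r)%N -> (a < r)%N -> isRfamily r a R -> (i < r)%N ->
  Ydiv r a i = DY r + R i - R ((i + a) %% r)%N.
Proof.
move=> hr har [R0 HR] hi.
have hr0 : (0 < r)%N by lia.
have rnz : (r%:R : rat) != 0 by rewrite pnatr_eq0; lia.
have H := HR ((i + a) %% r)%N (ltn_pmod _ hr0).
have E : (((i + a) %% r + r - a) %% r)%N = i.
  have -> : ((i + a) %% r + r - a = (i + a) %% r + (r - a))%N by lia.
  rewrite modnDml.
  have -> : (i + a + (r - a) = i + r)%N by lia.
  by rewrite modnDr modn_small.
rewrite E in H.
apply/ffunP => -[j|]; move/ffunP/(_ (Some j)): H || move/ffunP/(_ None): H.
- rewrite ?ffBE ?ffDE ?ffNE ZS DZS YS DYS modn_mod => H.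
  have hj : (j <= r)%N by rewrite -ltnS.
  have HD : ((r - j)%:R / r%:R + j%:R / r%:R : rat) = 1.
    by rewrite natrB // -mulrDl subrK divff.
  have HB : ((j <= tau r a ((i + a) %% r))%:R + (tau r a ((i + a) %% r) < j)%:R : rat) = 1.
    by case: leqP.
  lra.
- rewrite ?ffBE ?ffDE ?ffNE ZN DZN YN DYN => H.
  lra.
Qed.

Theorem mainTheorem8 (r a b : nat) (hr : (1 < r)%N) (ha0 : (0 < a)%N) (har : (a < r)%N)
    (hcop : coprime r a) (hb : ((a * b) %% r)%N = 1%N) :
  (exists X : nat -> Div r, isXfamily r a X) /\
  (exists R : nat -> Div r, isRfamily r a R) /\
  (forall (X R : nat -> Div r), isXfamily r a X -> isRfamily r a R ->
    forall i, (i < r)%N ->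
      [/\ X i = DX r b + R i - R ((i + 1) %% r)%N,
          Ydiv r a i = DY r + R i - R ((i + a) %% r)%N &
          Zdiv r a i = DZ r + R i - R ((i + r - a) %% r)%N]).
Proof.
have hr0 : (0 < r)%N by lia.
set b0 := (b %% r)%N.
have hab0 : ((a * b0) %% r)%N = 1%N by rewrite /b0 modnMmr.
have [_ hb0] := inv_pos _ _ _ hr hab0.
have hbr : (b0 < r)%N by rewrite /b0 ltn_pmod.
have HRc := Rc_isR r a b0 hr ha0 har hb0 hbr hab0.
have HW : forall R, isRfamily r a R -> isXfamily r a (W r b R).
  move=> R HR; split.
  - have H1 := R1 r a b R hr ha0 har hb HR.
    rewrite /W add0n modn_small // HR.1.
    apply/ffunP => x; move/ffunP/(_ x): H1.
    rewrite ?ffBE ?ffDE ?ffNE ?ffunE => H1; lra.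
  - by move=> i hi; apply: (W_rec r a b R i har HR hi).
split; first by exists (W r b (Rc r a b0)); apply: HW.
split; first by exists (Rc r a b0).
move=> X R HX HR i hi; split.
- have HWR := HW R HR.
  apply: (X_uniq r a b X (W r b R) hr har hb _ HX.2 HWR.2 i hi).
  by rewrite HX.1 HWR.1.
- exact: (Y_id r a R i hr har HR hi).
- exact: HR.2.
Qed.
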